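(* Let $a,b,x\in M_d(\mathbb{C})$ be three matrices, where $b$ is Hermitian and positive definite, and suppose $bx+xb=a$. Then \[\|x\|\le\sqrt{\tfrac d2}\,\|b^{-1}\|\,\|a\|,\] where $\|\cdot\|$ denotes the Frobenius norm $\|x\|=\sqrt{\operatorname{tr}(xx^* )}$. *)

(* Defs.v *)
From HB Require Import structures.
From mathcomp Require Import all_boot all_order all_algebra.
Set Implicit Arguments. Unset Strict Implicit. Unset Printing Implicit Defensive.
Import Order.TTheory GRing.Theory Num.Theory.
Local Open Scope ring_scope.
Local Open Scope sesquilinear_scope.

Definition frob {C : numClosedFieldType} (d : nat) (x : 'M[C]_d) : C :=
  sqrtC (\tr (x *m x ^t*)).

Definition posdefmx {C : numClosedFieldType} (d : nat) (b : 'M[C]_d) : Prop :=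
  b \is hermsymmx /\
  forall v : 'rV[C]_d, v != 0 -> 0 < (v *m b *m v ^t*) 0 0.

(* Main.v *)
Require Import Defs.
From HB Require Import structures.
From mathcomp Require Import all_boot all_order all_algebra.
Import Order.TTheory GRing.Theory Num.Theory.
Local Open Scope ring_scope.
Local Open Scope sesquilinear_scope.

Lemma ctM {C : numClosedFieldType} {d : nat} (X Y : 'M[C]_d) : (X *m Y)^t* = Y^t* *m X^t*.
Proof. by rewrite trmx_mul map_mxM. Qed.

Lemma trE {C : numClosedFieldType} {d : nat} (X Y : 'M[C]_d) :
  \tr (X *m Y^t*) = \sum_i \sum_j X i j * (Y i j)^*.
Proof. by rewrite /mxtrace; apply: eq_bigr => i _; rewrite !mxE; apply: eq_bigr => j _; rewrite !mxE. Qed.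

Lemma tr_dot {C : numClosedFieldType} {d : nat} (X Y : 'M[C]_d) :
  \tr (X *m Y^t*) = dotmx (mxvec X) (mxvec Y).
Proof.
rewrite trE dotmxE mxE.
rewrite (reindex (uncurry (@mxvec_index d d))) /=; last exact: curry_mxvec_bij.
rewrite pair_big /=; apply: eq_bigr => -[i j] _ /=.
by rewrite !mxE !mxvecE.
Qed.

Lemma frobCS {C : numClosedFieldType} {d : nat} (X Y : 'M[C]_d) :
  `|\tr (X *m Y^t*)| <= sqrtC (\tr (X *m X^t*)) * sqrtC (\tr (Y *m Y^t*)).
Proof.
rewrite !tr_dot.
by case: (CauchySchwarz_sqrt (@dotmx C (d * d)) (mxvec X) (mxvec Y)).
Qed.

Lemma fr2_ge0 {C : numClosedFieldType} {d : nat} (X : 'M[C]_d) : 0 <= \tr (X *m X^t*).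
Proof. by rewrite tr_dot dnorm_ge0. Qed.

Lemma fr2_gt0 {C : numClosedFieldType} {d : nat} (X : 'M[C]_d) : X != 0 -> 0 < \tr (X *m X^t*).
Proof. by move=> HX; rewrite tr_dot dnorm_gt0 mxvec_eq0. Qed.

Lemma tr_rows {C : numClosedFieldType} {d : nat} (X M : 'M[C]_d) :
  \tr (X *m M *m X^t*) = \sum_i (row i X *m M *m (row i X)^t*) 0 0.
Proof.
rewrite /mxtrace; apply: eq_bigr => i _; rewrite !mxE; apply: eq_bigr => k _.
rewrite !mxE; congr (_ * _); apply: eq_bigr => l _; by rewrite !mxE.
Qed.

Lemma rowdot {C : numClosedFieldType} {d : nat} (X Y : 'M[C]_d) i j :
  dotmx (row i X) (row j Y) = \sum_k X i k * (Y j k)^*.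
Proof. by rewrite dotmxE !mxE; apply: eq_bigr => k _; rewrite !mxE. Qed.

Lemma fr2_rows {C : numClosedFieldType} {d : nat} (X : 'M[C]_d) :
  \tr (X *m X^t*) = \sum_i dotmx (row i X) (row i X).
Proof. by rewrite trE; apply: eq_bigr => i _; rewrite rowdot. Qed.

Lemma fr2_ct {C : numClosedFieldType} {d : nat} (X : 'M[C]_d) :
  \tr (X^t* *m X^t*^t*) = \tr (X *m X^t*).
Proof. by rewrite trmxCK mxtrace_mulC. Qed.

Lemma submult {C : numClosedFieldType} {d : nat} (A B : 'M[C]_d) :
  \tr ((A *m B) *m (A *m B)^t*) <= \tr (A *m A^t*) * \tr (B *m B^t*).
Proof.
rewrite -(fr2_ct B) (fr2_rows A) (fr2_rows (B^t*)) trE big_distrl /=.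
apply: ler_sum => i _; rewrite big_distrr /=; apply: ler_sum => j _.
have -> : (A *m B) i j = dotmx (row i A) (row j (B^t*)).
  by rewrite rowdot mxE; apply: eq_bigr => k _; rewrite !mxE conjCK.
rewrite -normCK.
by case: (CauchySchwarz (@dotmx C d) (row i A) (row j (B^t*))).
Qed.

Lemma exists_row {C : numClosedFieldType} {d : nat} (X : 'M[C]_d) :
  X != 0 -> exists i, row i X != 0.
Proof.
move=> HX; case: (pickP (fun i => row i X != 0)) => [i Hi|H]; first by exists i.
exfalso; move/eqP: HX; apply; apply/row_matrixP => i.
by move/negbFE/eqP: (H i) => ->; rewrite row0.
Qed.
Lemma F_gt0 {C : numClosedFieldType} {d : nat} (b X : 'M[C]_d) :
  posdefmx b -> X != 0 -> 0 < \tr (X *m b *m X^t*).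
Proof.
move=> [_ hb] HX; have [i Hi] := @exists_row _ _ _ HX.
rewrite tr_rows (bigD1 i) //= ltr_wpDr ?hb //.
apply: sumr_ge0 => j _; have [->|Hj] := eqVneq (row j X) 0.
  by rewrite !mul0mx mxE.
exact/ltW/hb.
Qed.

Lemma F_ge0 {C : numClosedFieldType} {d : nat} (b X : 'M[C]_d) :
  posdefmx b -> 0 <= \tr (X *m b *m X^t*).
Proof.
move=> hb; have [->|HX] := eqVneq X 0; first by rewrite !mul0mx mxtrace0.
exact/ltW/F_gt0.
Qed.

Lemma pd_unit {C : numClosedFieldType} {d : nat} (b : 'M[C]_d) :
  posdefmx b -> b \in unitmx.
Proof.
move=> hb; rewrite -row_free_unit -kermx_eq0; apply/negP => /negP HK.
have [i Hi] := @exists_row _ _ _ HK.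
have := hb.2 _ Hi; rewrite -row_mul mulmx_ker row0 mul0mx mxE.
by rewrite ltxx.
Qed.

Lemma pd_herm {C : numClosedFieldType} {d : nat} (b : 'M[C]_d) :
  posdefmx b -> b^t* = b.
Proof. by move=> [/is_hermitianmxP hb _]; rewrite [in RHS]hb expr0 scale1r. Qed.

Lemma inv_herm {C : numClosedFieldType} {d : nat} (b : 'M[C]_d) :
  posdefmx b -> (invmx b)^t* = invmx b.
Proof. by move=> hb; rewrite trmx_inv map_invmx pd_herm. Qed.

Lemma ctBZ {C : numClosedFieldType} {d : nat} (X Y : 'M[C]_d) s :
  (X - s *: Y)^t* = X^t* - s^* *: Y^t*.
Proof. by apply/matrixP => i j; rewrite !mxE rmorphB rmorphM. Qed.
From mathcomp Require Import ring.
Lemma key {C : numClosedFieldType} {d : nat} (b y : 'M[C]_d) :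
  posdefmx b -> \tr (y *m y^t*) <= frob (invmx b) * \tr (y *m b *m y^t*).
Proof.
move=> hb; have bu := pd_unit _ hb.
have [->|Hy] := eqVneq y 0; first by rewrite !mul0mx mxtrace0 mulr0.
set B := invmx b.
set Y2 := \tr (y *m y^t*); set T := \tr (y *m b *m y^t*); set Q := \tr (y *m B *m y^t*).
have Y2gt0 : 0 < Y2 := fr2_gt0 _ Hy.
have Hw : y *m B != 0.
  by apply: contraNneq Hy => H; rewrite -(mulmxKV bu y) H mul0mx.
have Qgt0 : 0 < Q.
  by have := F_gt0 _ _ hb Hw; rewrite ctM inv_herm // !mulmxA (mulmxKV bu).
set s := Y2 / Q.
have sc : s^* = s by rewrite geC0_conj // divr_ge0 // ltW.
have := F_ge0 b (y - s *: (y *m B)) hb.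
rewrite ctBZ ctM inv_herm // sc.
rewrite !mulmxBl !mulmxBr -!scalemxAl -!scalemxAr !mulmxA (mulmxK bu) (mulmxKV bu).
rewrite !raddfB /= !mxtraceZ -/Y2 -/T -/Q.
have -> : T - s * Y2 + (- (s * Y2) - - (s * (s * Q))) = T - Y2 * Y2 / Q.
  by rewrite /s; field; rewrite gt_eqF.
rewrite subr_ge0 ler_pdivrMr // => H1.
have H2 : Q <= frob B * Y2.
  rewrite -[Q]gtr0_norm //; apply: le_trans (frobCS (y *m B) y) _.
  have H3 : sqrtC (\tr ((y *m B) *m (y *m B)^t*)) <= sqrtC Y2 * frob B.
    rewrite /frob -sqrtCM ?nnegrE ?fr2_ge0 // ler_sqrtC ?nnegrE ?mulr_ge0 ?fr2_ge0 //.
    exact: submult.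
  have Hs : 0 <= sqrtC Y2 by rewrite sqrtC_ge0 fr2_ge0.
  apply: le_trans (ler_wpM2r Hs H3) _.
  by rewrite [X in X <= _]mulrC mulrA -expr2 sqrtCK mulrC.
have H4 : Y2 * Y2 <= (frob B * T) * Y2.
  apply: le_trans H1 _.
  have -> : frob B * T * Y2 = T * (frob B * Y2) by ring.
  by apply: ler_wpM2l H2; apply: F_ge0.
by rewrite ler_pM2r // in H4.
Qed.
Lemma frob_ge0 {C : numClosedFieldType} {d : nat} (X : 'M[C]_d) : 0 <= frob X.
Proof. by rewrite /frob sqrtC_ge0 fr2_ge0. Qed.

Theorem lemma4p9 (C : numClosedFieldType) (d : nat) (a b x : 'M[C]_d) :
  posdefmx b -> b *m x + x *m b = a ->
  frob x <= sqrtC (d%:R / 2) * frob (invmx b) * frob a.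
Proof.
move=> hb hab.
set N := frob (invmx b).
have K1 := key b x hb.
have K2 := key b (x^t*) hb; rewrite fr2_ct in K2.
have Hsum : \tr (x *m b *m x^t*) + \tr (x^t* *m b *m x^t*^t*) = \tr (a *m x^t*).
  rewrite -hab trmxCK mulmxDl mxtraceD addrC; congr (_ + _).
  by rewrite [RHS]mxtrace_mulC mulmxA.
have Tpos : 0 <= \tr (a *m x^t*) by rewrite -Hsum addr_ge0 // F_ge0.
have N0 : 0 <= N by apply: frob_ge0.
have H : \tr (x *m x^t*) + \tr (x *m x^t*) <= N * (frob a * frob x).
  apply: le_trans (lerD K1 K2) _; rewrite -mulrDr Hsum.
  apply: ler_wpM2l => //; rewrite -[X in X <= _]ger0_norm //.
  exact: frobCS.
have ge0 : 0 <= sqrtC (d%:R / 2) * N * frob a.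
  by rewrite !mulr_ge0 ?frob_ge0 // sqrtC_ge0 divr_ge0 ?ler0n.
have [fx0|fxn0] := eqVneq (frob x) 0; first by rewrite fx0.
have fxpos : 0 < frob x by rewrite lt_def fxn0 frob_ge0.
have E : \tr (x *m x^t*) = frob x * frob x by rewrite -expr2 sqrtCK.
rewrite E -mulr2n -mulrnAl mulrA ler_pM2r // in H.
have dpos : (0 < d)%N.
  rewrite lt0n; apply/eqP => d0; subst d.
  by move: fxn0; rewrite /frob /mxtrace big_ord0 sqrtC0 eqxx.
have half : (1 / 2 : C) <= sqrtC (d%:R / 2).
  have h2 : (0 : C) <= 1 / 2 by rewrite divr_ge0 ?ler0n.
  rewrite -[X in X <= _](sqrCK h2) ler_sqrtC ?nnegrE ?divr_ge0 ?ler0n ?exprn_ge0 //.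
  rewrite -(@ler_pM2r _ 2) ?ltr0n // divfK ?pnatr_eq0 //.
  have -> : (1 / 2) ^+ 2 * 2 = 1 / 2 :> C by field; rewrite ?pnatr_eq0.
  apply: le_trans (_ : 1 <= _); last by rewrite ler1n.
  by rewrite ler_pdivrMr ?ltr0n // mul1r ler1n.
have fxh : frob x <= 1 / 2 * (N * frob a).
  by rewrite [X in _ <= X]mulrC mulrA mulr1 ler_pdivlMr ?ltr0n // mulr_natr.
apply: le_trans fxh _; rewrite -[X in _ <= X]mulrA; apply: ler_wpM2r => //.
by rewrite mulr_ge0 ?frob_ge0.
Qed.
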